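(* Let $X$ be as in the context and assume $X$ is recurrent. Suppose there exist non-negative functions $f_1,f_2$ on $\mathbb S$ such that (i) $\lim_{x\to\infty}f_1(x)=\infty$ and $\lim_{x\to\infty}f_2(x)/f_1(x)=\infty$; (ii) $\mathcal A f_1(x)\ge0$ for all sufficiently large $x\in\mathbb S$; (iii) $\mathcal A f_2(x)\lesssim 1$. Then $X$ is null recurrent.
   Context: Let $\mathbb S\subseteq\mathbb Z_{\ge0}$ be an infinite set and let $X$ be an irreducible continuous-time Markov chain on $\mathbb S$ whose generator acts on functions $f:\mathbb S\to\mathbb R$ by $\mathcal A f(x)=\sum_{\eta\in\mathbb Z}\lambda_\eta(x)\big(f(x+\eta)-f(x)\big)$, where $\lambda_\eta(x)$ is the rate of the jump $x\to x+\eta$ (and $\lambda_\eta(x)=0$ whenever $x+\eta\notin\mathbb S$). Standing assumption: (a) there is a finite set $\Gamma\subset\mathbb Z$ such that $\lambda_\eta\equiv0$ for $\eta\notin\Gamma$; (b) $0\le\lambda_\eta(x)<\infty$ for all $x,\eta$. Notation: $f\lesssim g$ means there is $C>0$ with $f(x)\le Cg(x)$ for all sufficiently large $x\in\mathbb S$. $X$ is null recurrent if it is recurrent but $\mathbb E_x[\tau_x]=\infty$ ($\tau_x$ the first return time to $x$ after the first jump). *)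

(* Defs.v *)
From HB Require Import structures.
From mathcomp Require Import all_boot all_order all_algebra.
From mathcomp Require Import all_classical all_reals all_analysis.
Set Implicit Arguments. Unset Strict Implicit. Unset Printing Implicit Defensive.
Import Order.TTheory GRing.Theory Num.Theory.
Local Open Scope classical_set_scope.
Local Open Scope ring_scope.

(* Continuous-time Markov chain on a state space S : set nat (S ⊆ Z_{>=0}),
   given by jump rates lam eta x  (rate of x -> x + eta, eta : int),
   with a finite jump set Gamma : seq int (duplicate-free).               *)

Section CTMC.
Variable R : realType.
Variable S : set nat.
Variable Gamma : seq int.
Variable lam : int -> nat -> R.

Definition inS (z : int) : Prop := (0 <= z)%R /\ S (absz z).

Definition gen (f : nat -> R) (x : nat) : R :=
  \sum_(eta <- Gamma) lam eta x * (f (absz (x%:Z + eta)) - f x).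

(* total jump rate out of x (jumps eta = 0 are fictitious) *)
Definition qrate (x : nat) : R := \sum_(eta <- Gamma | eta != 0) lam eta x.

Definition jumpP (x y : nat) : R :=
  if x == y then 0 else lam (y%:Z - x%:Z) x / qrate x.

Fixpoint path_prob (x : nat) (s : seq nat) : R :=
  if s is y :: s' then jumpP x y * path_prob y s' else 1.

Definition excursion (x : nat) (s : seq nat) : Prop :=
  s <> [::] /\ last x s = x /\ all (fun y => y != x) (behead (belast x s)).

(* conditional expected duration of the excursion given the jump path:
   sum of mean holding times 1/q(y) over the states occupied before return *)
Definition excursion_time (x : nat) (s : seq nat) : R :=
  \sum_(y <- belast x s) (qrate y)^-1.

Definition return_prob (x : nat) : \bar R :=
  \esum_(s in excursion x) (path_prob x s)%:E.

Definition expected_return_time (x : nat) : \bar R :=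
  \esum_(s in excursion x) (path_prob x s * excursion_time x s)%:E.

Definition irreducible : Prop :=
  forall x y, S x -> S y ->
    exists s : seq nat, last x s = y /\
      path (fun a b => (0 < lam (b%:Z - a%:Z) a) && (a != b)) x s.

Definition recurrent : Prop := forall x, S x -> return_prob x = 1%E.

Definition null_recurrent : Prop :=
  recurrent /\ forall x, S x -> expected_return_time x = +oo%E.

End CTMC.

(* Main.v *)
Require Import Defs.
From HB Require Import structures.
From mathcomp Require Import all_boot all_order all_algebra.
From mathcomp Require Import all_classical all_reals all_analysis.
From mathcomp Require Import zify ring lra.
Import Order.TTheory GRing.Theory Num.Theory.
Local Open Scope classical_set_scope.
Local Open Scope ring_scope.
Set Implicit Arguments. Unset Strict Implicit. Unset Printing Implicit Defensive.
Section Chain.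
Variables (R : realType) (S : set nat) (Gamma : seq int) (lam : int -> nat -> R).
Hypothesis HG : uniq Gamma.
Hypothesis Hout : forall eta x, S x -> eta \notin Gamma -> lam eta x = 0.
Hypothesis Hlam0 : forall eta x, 0 <= lam eta x.
Hypothesis HinS : forall eta x, S x -> ~ inS S (x%:Z + eta) -> lam eta x = 0.
Hypothesis Hq : forall y, S y -> 0 < qrate Gamma lam y.

Local Notation q := (qrate Gamma lam).

Definition J : nat := \sum_(eta <- Gamma) `|eta|%N.
Definition sc (y : nat) : seq nat := index_iota 0 (y + J).+1.
Definition P (y v : nat) : R := if `[< S y >] then jumpP Gamma lam y v else 0.

Lemma q_ge0 y : 0 <= q y.
Proof. by apply: sumr_ge0 => eta _; apply: Hlam0. Qed.

Lemma invq_ge0 y : 0 <= (q y)^-1.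
Proof. by rewrite invr_ge0 q_ge0. Qed.

Lemma P_ge0 y v : 0 <= P y v.
Proof.
rewrite /P; case: asboolP => // _; rewrite /jumpP; case: eqP => // _.
by rewrite divr_ge0 ?q_ge0.
Qed.

Lemma PE y v : S y -> P y v = jumpP Gamma lam y v.
Proof. by move=> Sy; rewrite /P; case: asboolP. Qed.

Lemma P_notS y v : ~ S y -> P y v = 0.
Proof. by move=> Sy; rewrite /P; case: asboolP. Qed.

Lemma absz_add_sub (y v : nat) : absz (y%:Z + (v%:Z - y%:Z)) = v.
Proof. lia. Qed.

Lemma jumpP_notS y v : S y -> ~ S v -> jumpP Gamma lam y v = 0.
Proof.
move=> Sy Sv; rewrite /jumpP; case: eqP => // _.
rewrite HinS ?mul0r //; case=> _; by rewrite absz_add_sub.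
Qed.

Lemma absz_le_J eta : eta \in Gamma -> (`|eta| <= J)%N.
Proof.
move=> etaG; rewrite /J (bigD1_seq eta) //=; exact: leq_addr.
Qed.

Lemma P_supp y v : P y v != 0 -> [/\ S y, S v, v != y & (v <= y + J)%N].
Proof.
rewrite /P; case: asboolP => [Sy|_]; last by rewrite eqxx.
rewrite /jumpP => H.
have nyv : y != v by apply/eqP => e; move: H; rewrite e eqxx eqxx.
rewrite (negPf nyv) in H.
have lamne : lam (v%:Z - y%:Z) y != 0.
  by apply/eqP => e; move: H; rewrite e mul0r eqxx.
split; first exact: Sy.
- apply/not_notP => Sv; move: lamne; rewrite HinS ?eqxx //.
  by case=> _; rewrite absz_add_sub.
- by rewrite eq_sym.
- have inG : (v%:Z - y%:Z) \in Gamma.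
    by apply/not_notP => /negP nG; move: lamne; rewrite Hout ?eqxx.
  have := absz_le_J inG; lia.
Qed.

Lemma P_in_sc y v : P y v != 0 -> v \in sc y.
Proof.
by case/P_supp => _ _ _ h; rewrite /sc mem_index_iota /= ltnS h.
Qed.

Lemma reindex y (g : nat -> R) : S y ->
  \sum_(v <- sc y) (if v == y then 0 else lam (v%:Z - y%:Z) y * g v) =
  \sum_(eta <- Gamma) (if eta == 0 then 0 else lam eta y * g (absz (y%:Z + eta))).
Proof.
move=> Sy.
have step1 : forall v, (if v == y then 0 else lam (v%:Z - y%:Z) y * g v) =
  \sum_(eta <- Gamma) (if (v != y) && (eta == v%:Z - y%:Z) then lam eta y * g v else 0).
  move=> v; case: eqP => [_|nvy] /=; first by rewrite big1.
  rewrite -big_mkcond /=.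
  case: (boolP ((v%:Z - y%:Z) \in Gamma)) => inG.
    by rewrite -big_filter filter_pred1_uniq // big_seq1.
  rewrite Hout // mul0r big1 // => eta /eqP ->; by rewrite Hout // mul0r.
rewrite (eq_bigr _ (fun v _ => step1 v)) exchange_big /=.
apply: eq_bigr => eta _.
case: (eqVneq (lam eta y) 0) => [->|lne].
  by rewrite mul0r if_same big1 // => v _; rewrite mul0r if_same.
have etaG : eta \in Gamma by apply/not_notP => /negP nG; move: lne; rewrite Hout ?eqxx.
have [y0 Sw] : inS S (y%:Z + eta) by apply/not_notP => nS; move: lne; rewrite HinS ?eqxx.
set w := absz (y%:Z + eta).
have cond : forall v, ((v != y) && (eta == v%:Z - y%:Z)) = (eta != 0) && (v == w).
  move=> v; apply/idP/idP.
    by case/andP => /eqP h1 /eqP h2; apply/andP; split; apply/eqP; rewrite /w; lia.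
  by case/andP => /eqP h1 /eqP h2; apply/andP; split; apply/eqP; rewrite /w in h2; lia.
rewrite (eq_bigr (fun v => if (eta != 0) && (v == w) then lam eta y * g v else 0));
  last by move=> v _; rewrite cond.
case: eqP => [->|ne0] /=; first by rewrite big1.
rewrite -big_mkcond /= /sc big_nat1_eq /=.
have := absz_le_J etaG => hJ.
have hw : (w < (y + J).+1)%N by rewrite /w; lia.
by rewrite hw.
Qed.

Lemma rowsum y : S y -> \sum_(v <- sc y) P y v = 1.
Proof.
move=> Sy.
rewrite (eq_bigr (fun v => (if v == y then 0 else lam (v%:Z - y%:Z) y * 1) / q y)); last first.
  move=> v _; rewrite PE // /jumpP eq_sym; case: eqP => _; by rewrite ?mul0r ?mulr1.
rewrite -mulr_suml reindex // /qrate.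
rewrite (eq_bigr (fun eta => if eta != 0 then lam eta y else 0)); last first.
  by move=> eta _; case: eqP => _ //=; rewrite mulr1.
by rewrite -big_mkcond /= mulfV // gt_eqF // Hq.
Qed.

Lemma rowsum_le y : \sum_(v <- sc y) P y v <= 1.
Proof.
case: (pselect (S y)) => Sy; first by rewrite rowsum.
by rewrite big1 // => v _; rewrite P_notS.
Qed.

Lemma gen_P y (f : nat -> R) : S y ->
  gen Gamma lam f y = q y * (\sum_(v <- sc y) P y v * f v - f y).
Proof.
move=> Sy.
rewrite (eq_bigr (fun v => (if v == y then 0 else lam (v%:Z - y%:Z) y * f v) / q y)); last first.
  move=> v _; rewrite PE // /jumpP eq_sym; case: eqP => _; first by rewrite !mul0r.
  by rewrite mulrAC.
rewrite -mulr_suml reindex // mulrBr mulrCA mulfV ?gt_eqF ?Hq // mulr1.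
rewrite /gen /qrate mulr_suml [X in _ - X]big_mkcond -sumrB /=.
apply: eq_bigr => eta _; case: eqP => [->|_] /=.
  by rewrite addn0 subrr mulr0 subrr.
by rewrite mulrBr.
Qed.


Lemma lerM2l' (x a b : R) : 0 <= x -> a <= b -> x * a <= x * b.
Proof. by move=> x0 ab; apply: ler_wpM2l. Qed.
Lemma lerM2r' (x a b : R) : 0 <= x -> a <= b -> a * x <= b * x.
Proof. by move=> x0 ab; apply: ler_wpM2r. Qed.

Lemma sumP_le y (A B : nat -> R) : (forall v, S v -> A v <= B v) ->
  \sum_(v <- sc y) P y v * A v <= \sum_(v <- sc y) P y v * B v.
Proof.
move=> AB; apply: ler_sum => v _.
case: (eqVneq (P y v) 0) => [->|ne]; first by rewrite !mul0r.
case/P_supp: ne => _ Sv _ _.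
exact: lerM2l' (P_ge0 y v) (AB v Sv).
Qed.

Lemma sumP_ge0 y (A : nat -> R) : (forall v, S v -> 0 <= A v) ->
  0 <= \sum_(v <- sc y) P y v * A v.
Proof.
move=> A0; apply: sumr_ge0 => v _.
case: (eqVneq (P y v) 0) => [->|ne]; first by rewrite !mul0r.
case/P_supp: ne => _ Sv _ _.
exact: mulr_ge0 (P_ge0 y v) (A0 v Sv).
Qed.

Lemma sumP_le_const y c (A : nat -> R) : 0 <= c -> (forall v, S v -> A v <= c) ->
  \sum_(v <- sc y) P y v * A v <= c.
Proof.
move=> c0 Ac; apply: le_trans (sumP_le y Ac) _.
by rewrite -mulr_suml -[leRHS]mul1r; apply: lerM2r' => //; exact: rowsum_le.
Qed.

Lemma sumP_split y (A B : nat -> R) (c : R) :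
  \sum_(v <- sc y) P y v * A v + (\sum_(v <- sc y) P y v * B v) * c =
  \sum_(v <- sc y) P y v * (A v + B v * c).
Proof.
rewrite mulr_suml -big_split /=; apply: eq_bigr => v _.
by rewrite mulrDr mulrA.
Qed.

Lemma mono_le (u : nat -> R) : (forall n, u n <= u n.+1) ->
  forall n m, (n <= m)%N -> u n <= u m.
Proof.
move=> h n m /subnK <-; elim: (m - n)%N => [|k IH]; first by rewrite add0n.
rewrite addSn; exact: le_trans IH (h _).
Qed.

Fixpoint hit (D : pred nat) n y : R :=
  if n is n'.+1 then \sum_(v <- sc y) P y v * (if D v then 1 else hit D n' v) else 0.
Fixpoint etime (D : pred nat) n y : R :=
  if n is n'.+1 then \sum_(v <- sc y) P y v *
    (if D v then (q y)^-1 else hit D n' v * (q y)^-1 + etime D n' v) else 0.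
Fixpoint stime (D : pred nat) n y : R :=
  if n is n'.+1 then (q y)^-1 + \sum_(v <- sc y) P y v * (if D v then 0 else stime D n' v)
  else 0.
Fixpoint first2 (D E : pred nat) n y : R :=
  if n is n'.+1 then \sum_(v <- sc y) P y v *
    (if D v then 1 else if E v then 0 else first2 D E n' v) else 0.
Fixpoint Ex (D : pred nat) (g : nat -> R) n y : R :=
  if n is n'.+1 then \sum_(v <- sc y) P y v * (if D v then g v else Ex D g n' v)
  else g y.

Lemma hitS D n y : hit D n.+1 y =
  \sum_(v <- sc y) P y v * (if D v then 1 else hit D n v).
Proof. by []. Qed.
Lemma etimeS D n y : etime D n.+1 y = \sum_(v <- sc y) P y v *
    (if D v then (q y)^-1 else hit D n v * (q y)^-1 + etime D n v).
Proof. by []. Qed.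
Lemma stimeS D n y : stime D n.+1 y =
  (q y)^-1 + \sum_(v <- sc y) P y v * (if D v then 0 else stime D n v).
Proof. by []. Qed.
Lemma first2S D E n y : first2 D E n.+1 y = \sum_(v <- sc y) P y v *
    (if D v then 1 else if E v then 0 else first2 D E n v).
Proof. by []. Qed.
Lemma ExS D g n y : Ex D g n.+1 y =
  \sum_(v <- sc y) P y v * (if D v then g v else Ex D g n v).
Proof. by []. Qed.

Lemma hit_ge0 D n y : 0 <= hit D n y.
Proof.
elim: n y => [|n IH] y //; rewrite hitS; apply: sumP_ge0 => v _.
by case: (D v); rewrite ?ler01 ?IH.
Qed.

Lemma hit_le1 D n y : hit D n y <= 1.
Proof.
elim: n y => [|n IH] y; first by rewrite ler01.
rewrite hitS; apply: sumP_le_const; rewrite ?ler01 // => v _.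
by case: (D v); rewrite ?lexx ?IH.
Qed.

Lemma hit_mono D n y : hit D n y <= hit D n.+1 y.
Proof.
elim: n y => [|n IH] y; first exact: hit_ge0.
rewrite hitS [leRHS]hitS; apply: sumP_le => v _.
by case: (D v); rewrite ?lexx ?IH.
Qed.

Lemma hit_le D n m y : (n <= m)%N -> hit D n y <= hit D m y.
Proof. exact: (mono_le (fun k => hit_mono D k y)). Qed.

Lemma etime_ge0 D n y : 0 <= etime D n y.
Proof.
elim: n y => [|n IH] y //; rewrite etimeS; apply: sumP_ge0 => v _.
case: (D v); rewrite ?invq_ge0 //.
by rewrite addr_ge0 ?IH // mulr_ge0 ?hit_ge0 ?invq_ge0.
Qed.

Lemma etime_mono D n y : etime D n y <= etime D n.+1 y.
Proof.
elim: n y => [|n IH] y; first exact: etime_ge0.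
rewrite etimeS [leRHS]etimeS; apply: sumP_le => v _.
case: (D v); rewrite ?lexx //.
by rewrite lerD ?IH //; apply: lerM2r'; [exact: invq_ge0|exact: hit_mono].
Qed.

Lemma etime_le D n m y : (n <= m)%N -> etime D n y <= etime D m y.
Proof. exact: (mono_le (fun k => etime_mono D k y)). Qed.

Lemma stime_ge0 D n y : 0 <= stime D n y.
Proof.
elim: n y => [|n IH] y //; rewrite stimeS addr_ge0 ?invq_ge0 //.
by apply: sumP_ge0 => v _; case: (D v); rewrite ?lexx ?IH.
Qed.

Lemma stime_mono D n y : stime D n y <= stime D n.+1 y.
Proof.
elim: n y => [|n IH] y; first exact: stime_ge0.
rewrite stimeS [leRHS]stimeS lerD2l; apply: sumP_le => v _.
by case: (D v); rewrite ?lexx ?IH.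
Qed.

Lemma stime_le D n m y : (n <= m)%N -> stime D n y <= stime D m y.
Proof. exact: (mono_le (fun k => stime_mono D k y)). Qed.

Lemma first2_ge0 D E n y : 0 <= first2 D E n y.
Proof.
elim: n y => [|n IH] y //; rewrite first2S; apply: sumP_ge0 => v _.
by case: (D v); case: (E v); rewrite ?ler01 ?lexx ?IH.
Qed.

Lemma first2_mono D E n y : first2 D E n y <= first2 D E n.+1 y.
Proof.
elim: n y => [|n IH] y; first exact: first2_ge0.
rewrite first2S [leRHS]first2S; apply: sumP_le => v _.
by case: (D v); case: (E v); rewrite ?lexx ?IH.
Qed.

Lemma first2_le D E n m y : (n <= m)%N -> first2 D E n y <= first2 D E m y.
Proof. exact: (mono_le (fun k => first2_mono D E k y)). Qed.

Lemma first2_sum x w n y : x != w ->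
  first2 (pred1 x) (pred1 w) n y + first2 (pred1 w) (pred1 x) n y <= 1.
Proof.
move=> nxw; elim: n y => [|n IH] y; first by rewrite addr0 ler01.
rewrite !first2S -[X in _ + X]mulr1 sumP_split.
apply: sumP_le_const; rewrite ?ler01 // => v _ /=.
case: (eqVneq v x) => [->|nvx]; first by rewrite (negPf nxw) mul0r addr0 lexx.
case: (eqVneq v w) => [_|nvw] /=; first by rewrite add0r mul1r lexx.
by rewrite mulr1 IH.
Qed.

Lemma hit_decomp x w n y : x != w ->
  hit (pred1 x) n y <= first2 (pred1 x) (pred1 w) n y +
                       first2 (pred1 w) (pred1 x) n y * hit (pred1 x) n w.
Proof.
move=> nxw; elim: n y => [|n IH] y; first by rewrite mul0r addr0.
rewrite !first2S sumP_split hitS; apply: sumP_le => v _ /=.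
case: (eqVneq v x) => [->|nvx]; first by rewrite (negPf nxw) mul0r addr0 lexx.
case: (eqVneq v w) => [->|nvw]; first by rewrite add0r mul1r hit_mono.
apply: le_trans (IH v) _; rewrite lerD2l; apply: lerM2l'; first exact: first2_ge0.
exact: hit_mono.
Qed.

Lemma stime_decomp x w n m y : x != w ->
  first2 (pred1 w) (pred1 x) n y * stime (pred1 x) m w <= stime (pred1 x) (n + m) y.
Proof.
move=> nxw; elim: n y => [|n IH] y; first by rewrite mul0r stime_ge0.
rewrite addSn first2S stimeS mulr_suml -[X in X <= _]add0r.
apply: lerD; first exact: invq_ge0.
rewrite (eq_bigr (fun v => P y v * ((if v == w then 1 else if v == x then 0
   else first2 (pred1 w) (pred1 x) n v) * stime (pred1 x) m w))); last first.
  by move=> v _; rewrite mulrA.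
apply: sumP_le => v _ /=.
case: (eqVneq v w) => [->|nvw].
  rewrite mul1r eq_sym (negPf nxw); apply: stime_le; exact: leq_addl.
case: (eqVneq v x) => [_|nvx] /=; first by rewrite mul0r lexx.
exact: IH.
Qed.

Lemma stime_sub (D1 D2 : pred nat) n y : (forall v, D1 v -> D2 v) ->
  stime D2 n y <= stime D1 n y.
Proof.
move=> D12; elim: n y => [|n IH] y //; rewrite !stimeS lerD2l; apply: sumP_le => v _.
case: (boolP (D1 v)) => [/D12 ->|nD1]; first by rewrite lexx.
by case: (D2 v); rewrite ?stime_ge0 ?IH.
Qed.

Lemma Ex_hit (D D' : pred nat) n y : (forall v, D' v -> D v) ->
  Ex D (fun v => if D v then 0 else 1) n y + hit D' n y <= 1.
Proof.
move=> D'D; elim: n y => [|n IH] y.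
  by rewrite /= addr0; case: (D y); rewrite ?ler01 ?lexx.
rewrite ExS hitS -[X in _ + X]mulr1 sumP_split.
apply: sumP_le_const; rewrite ?ler01 // => v _; rewrite mulr1.
case: (boolP (D v)) => Dv; first by rewrite add0r; case: (D' v); rewrite ?lexx ?hit_le1.
have -> : D' v = false by apply/negP => /D'D; rewrite (negPf Dv).
exact: IH.
Qed.

Lemma Ex_lyap1 (D : pred nat) (f : nat -> R) :
  (forall y, S y -> ~~ D y -> 0 <= gen Gamma lam f y) ->
  forall n y, S y -> ~~ D y -> f y <= Ex D f n y.
Proof.
move=> hgen; elim=> [|n IH] y Sy nDy; first exact: lexx.
rewrite ExS.
have h1 : f y <= \sum_(v <- sc y) P y v * f v.
  have := hgen y Sy nDy; rewrite gen_P // pmulr_rge0 ?Hq //.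
  by rewrite subr_ge0.
apply: le_trans h1 _; apply: sumP_le => v Sv.
by case: (boolP (D v)) => Dv; rewrite ?lexx ?IH.
Qed.

Lemma Ex_lyap2 (D : pred nat) (f : nat -> R) (C : R) : 0 <= C ->
  (forall y, S y -> ~~ D y -> gen Gamma lam f y <= C) ->
  forall n y, S y -> ~~ D y -> Ex D f n y <= f y + C * stime D n y.
Proof.
move=> C0 hgen; elim=> [|n IH] y Sy nDy; first by rewrite /= mulr0 addr0 lexx.
rewrite ExS stimeS.
have h1 : \sum_(v <- sc y) P y v * f v <= f y + C * (q y)^-1.
  have := hgen y Sy nDy; rewrite gen_P // -ler_pdivlMl ?Hq // lerBlDl.
  by rewrite mulrC.
apply: le_trans (sumP_le (B := fun v => f v + (if D v then 0 else stime D n v) * C) y _) _.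
  move=> v Sv; case: (boolP (D v)) => Dv; first by rewrite mul0r addr0 lexx.
  by rewrite mulrC IH.
rewrite -sumP_split.
apply: le_trans (lerD h1 (lexx _)) _.
by rewrite -addrA lerD2l [_ * C]mulrC -mulrDr lexx.
Qed.

Lemma Ex_lin (D : pred nat) (u g h : nat -> R) (K c e : R) : 0 <= K ->
  (forall v, S v -> u v <= K + c * g v + e * h v) ->
  forall n y, S y -> Ex D u n y <= K + c * Ex D g n y + e * Ex D h n y.
Proof.
move=> K0 hu; elim=> [|n IH] y Sy; first exact: hu.
rewrite !ExS.
apply: le_trans (sumP_le (B := fun v => K + c * (if D v then g v else Ex D g n v)
   + e * (if D v then h v else Ex D h n v)) y _) _.
  by move=> v Sv; case: (D v); rewrite ?hu ?IH.
rewrite (eq_bigr _ (fun v _ => mulrDr _ _ _)) big_split /=.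
rewrite (eq_bigr _ (fun v _ => mulrDr _ _ _)) big_split /= lerD // ?lerD //.
- by rewrite -mulr_suml -[leRHS]mul1r; apply: lerM2r' => //; exact: rowsum_le.
- by rewrite mulr_sumr; apply: ler_sum => v _; rewrite mulrCA lexx.
- by rewrite mulr_sumr; apply: ler_sum => v _; rewrite mulrCA lexx.
Qed.


Fixpoint pl n y : seq (seq nat) :=
  [::] :: (if n is n'.+1 then flatten [seq map (cons v) (pl n' v) | v <- sc y] else [::]).

Fixpoint pp y s : R := if s is v :: s' then P y v * pp v s' else 1.

Definition hits (D : pred nat) y (s : seq nat) : bool :=
  [&& s != [::], D (last y s) & all (fun u => ~~ D u) (behead (belast y s))].

Lemma plS n y : pl n.+1 y = [::] :: flatten [seq map (cons v) (pl n v) | v <- sc y].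
Proof. by []. Qed.

Lemma big_pl (F : seq nat -> R) n y :
  \sum_(s <- pl n.+1 y) F s = F [::] + \sum_(v <- sc y) \sum_(s <- pl n v) F (v :: s).
Proof.
rewrite plS big_cons big_flatten big_map; congr (_ + _).
by apply: eq_bigr => v _; rewrite big_map.
Qed.

Lemma pl_split (F : seq nat -> R) n y :
  \sum_(s <- pl n y) F s = F [::] + \sum_(s <- pl n y) (if s is [::] then 0 else F s).
Proof.
case: n => [|n]; first by rewrite !big_cons !big_nil /= !addr0.
by rewrite !big_pl /= add0r.
Qed.

Lemma hits_nil D y : hits D y [::] = false.
Proof. by []. Qed.

Lemma hits_cons D y v s :
  hits D y (v :: s) = if s is [::] then D v else ~~ D v && hits D v s.
Proof.
case: s => [|u s] /=; first by rewrite /hits /= andbT.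
rewrite /hits /=.
by case: (D v); case: (D (last u s)); case: all.
Qed.

Lemma sum_cons_hits D y v n (W : seq nat -> R) :
  \sum_(s <- pl n v) (hits D y (v :: s))%:R * W s =
  (D v)%:R * W [::] + (~~ D v)%:R * \sum_(s <- pl n v) (hits D v s)%:R * W s.
Proof.
rewrite pl_split [in RHS]pl_split hits_cons hits_nil mul0r add0r; congr (_ + _).
rewrite mulr_sumr; apply: eq_bigr => s _; case: s => [|u s]; first by rewrite mulr0.
by rewrite hits_cons; case: (D v) => /=; rewrite ?mul0r ?mul1r.
Qed.

Lemma hit_paths D n y : hit D n y = \sum_(s <- pl n y) (hits D y s)%:R * pp y s.
Proof.
elim: n y => [|n IH] y; first by rewrite /= big_cons big_nil hits_nil mul0r addr0.
rewrite big_pl hits_nil mul0r add0r hitS; apply: eq_bigr => v _.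
rewrite (eq_bigr (fun s => (hits D y (v :: s))%:R * pp v s * P y v)); last first.
  by move=> s _ /=; rewrite mulrCA mulrC.
rewrite -mulr_suml sum_cons_hits -IH mulrC /=; congr (_ * _).
by case: (D v) => /=; rewrite ?mulr1 ?mul0r ?addr0 ?mul1r ?add0r.
Qed.

Lemma tm_cons y v s : excursion_time Gamma lam y (v :: s) = (q y)^-1 + excursion_time Gamma lam v s.
Proof. by rewrite /excursion_time /= big_cons. Qed.

Lemma etime_paths D n y : etime D n y =
  \sum_(s <- pl n y) (hits D y s)%:R * pp y s * excursion_time Gamma lam y s.
Proof.
elim: n y => [|n IH] y; first by rewrite /= big_cons big_nil hits_nil !mul0r addr0.
rewrite big_pl hits_nil !mul0r add0r etimeS; apply: eq_bigr => v _.
rewrite (eq_bigr (fun s => P y v * ((hits D y (v :: s))%:R * (pp v s * (q y)^-1) +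
      (hits D y (v :: s))%:R * (pp v s * excursion_time Gamma lam v s)))); last first.
  move=> s *; rewrite /= tm_cons.
  by ring.
rewrite -mulr_sumr big_split /= !sum_cons_hits; congr (_ * _).
have e1 : \sum_(s <- pl n v) (hits D v s)%:R * (pp v s * (q y)^-1) = hit D n v * (q y)^-1.
  by rewrite hit_paths mulr_suml; apply: eq_bigr => s _; rewrite mulrA.
have e2 : \sum_(s <- pl n v) (hits D v s)%:R * (pp v s * excursion_time Gamma lam v s)
    = etime D n v.
  by rewrite IH; apply: eq_bigr => s _; rewrite mulrA.
rewrite e1 e2 /excursion_time /= big_nil mulr0 mul1r.
by case: (D v) => /=; rewrite ?mul0r ?mul1r ?addr0 ?add0r ?mulr0 ?mulr1.
Qed.

Lemma mem_flat (r : seq nat) (L : nat -> seq (seq nat)) v s :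
  (v :: s \in flatten [seq map (cons u) (L u) | u <- r]) = (v \in r) && (s \in L v).
Proof.
elim: r => [|a r IH] //=; rewrite mem_cat IH in_cons.
case: (eqVneq v a) => [->|nva] /=.
  by rewrite mem_map; [case: (s \in L a); rewrite ?andbF | move=> ? ? []].
have nm : (v :: s \in map (cons a) (L a)) = false.
  by apply/mapP => -[t _ [e _]]; move: nva; rewrite e eqxx.
by rewrite nm.
Qed.

Lemma nil_notin_flat (r : seq nat) (L : nat -> seq (seq nat)) :
  [::] \notin flatten [seq map (cons u) (L u) | u <- r].
Proof.
elim: r => [|a r IH] //=; rewrite mem_cat negb_or IH andbT.
by apply/mapP => -[].
Qed.

Lemma flat_uniq (r : seq nat) (L : nat -> seq (seq nat)) :
  uniq r -> (forall v, uniq (L v)) -> uniq (flatten [seq map (cons u) (L u) | u <- r]).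
Proof.
move=> ur uL; elim: r ur => [|a r IH] //= /andP[ar ur].
rewrite cat_uniq IH // andbT map_inj_uniq ?uL; last by move=> ? ? [].
apply/hasP => -[t] tin /mapP[s _ ts].
by move: tin; rewrite ts mem_flat (negPf ar).
Qed.

Lemma pl_uniq n y : uniq (pl n y).
Proof.
elim: n y => [|n IH] y //; rewrite plS cons_uniq nil_notin_flat flat_uniq //.
exact: iota_uniq.
Qed.

Definition bstep (a b : nat) : bool := (b <= a + J)%N.

Lemma pl_mem n y s : (size s <= n)%N -> path bstep y s -> s \in pl n y.
Proof.
elim: n y s => [|n IH] y [|v s] //; rewrite ?plS ?in_cons ?eqxx //.
move=> hs hp; move: hp; rewrite [path _ _ _]/= => /andP[hv hp].
rewrite mem_flat /sc mem_index_iota ltnS; rewrite /bstep in hv; rewrite hv IH //.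
Qed.

Lemma pp_path y s : pp y s != 0 -> path bstep y s.
Proof.
elim: s y => [|v s IH] y //=; rewrite mulf_eq0 negb_or => /andP[h1 h2].
by case/P_supp: h1 => _ _ _ h; rewrite /bstep h IH.
Qed.

Lemma pp_ge0 y s : 0 <= pp y s.
Proof. by elim: s y => [|v s IH] y //=; rewrite mulr_ge0 ?P_ge0. Qed.

Lemma pp_eq y s : S y -> path_prob Gamma lam y s = pp y s.
Proof.
elim: s y => [|v s IH] y Sy //=; rewrite PE //.
case: (pselect (S v)) => Sv; first by rewrite IH.
by rewrite jumpP_notS // !mul0r.
Qed.

Lemma hits_exc x s : hits (pred1 x) x s -> excursion x s.
Proof.
by case/and3P => /eqP h1 /eqP h2 h3; split.
Qed.

Lemma exc_hits x s : excursion x s -> hits (pred1 x) x s.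
Proof.
by case=> h1 [h2 h3]; apply/and3P; split => //; [apply/eqP|apply/eqP].
Qed.

Lemma etime_le_ert x n : S x ->
  ((etime (pred1 x) n x)%:E <= expected_return_time Gamma lam x)%E.
Proof.
move=> Sx; rewrite etime_paths.
set l := [seq s <- pl n x | hits (pred1 x) x s].
have ul : uniq l by rewrite filter_uniq // pl_uniq.
have -> : \sum_(s <- pl n x) (hits (pred1 x) x s)%:R * pp x s * excursion_time Gamma lam x s
  = \sum_(s <- l) path_prob Gamma lam x s * excursion_time Gamma lam x s.
  rewrite big_filter [RHS]big_mkcond /=; apply: eq_bigr => s _.
  by case: hits; rewrite ?mul1r ?mul0r // pp_eq.
apply: esum_ge; exists [set` l].
  split; first exact: finite_seq.
  by move=> s /= sl; apply: hits_exc; move: sl; rewrite mem_filter => /andP[].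
by rewrite -fsbig_seq // sumEFin lexx.
Qed.

Lemma sum_filter_le (r : seq (seq nat)) (a : pred (seq nat)) (F : seq nat -> R) :
  (forall s, 0 <= F s) -> \sum_(s <- r | a s) F s <= \sum_(s <- r) F s.
Proof.
move=> F0; rewrite big_mkcond /=; apply: ler_sum => s _.
by case: (a s); rewrite ?lexx ?F0.
Qed.

Lemma sub_sum x n (L : seq (seq nat)) : uniq L ->
  (forall s, s \in L -> hits (pred1 x) x s /\ (size s <= n)%N) ->
  \sum_(s <- L) pp x s <= hit (pred1 x) n x.
Proof.
move=> uL hL; rewrite hit_paths.
rewrite (bigID (fun s => s \in pl n x)) /=.
rewrite [X in _ + X]big_seq_cond [X in _ + X]big1 ?addr0; last first.
  move=> s /andP[sL]; rewrite /= => npl; apply/eqP/negP => /negP ne.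
  have [_ hs] := hL s sL.
  by move: npl; rewrite pl_mem // pp_path.
rewrite -big_filter.
have pe : perm_eq [seq s <- L | s \in pl n x] [seq s <- pl n x | s \in L].
  apply: uniq_perm; rewrite ?filter_uniq ?pl_uniq // => s.
  by rewrite !mem_filter andbC.
rewrite (perm_big _ pe) /= big_filter.
apply: le_trans (sum_filter_le (pl n x) (fun s => s \in L) _) => [|s].
  rewrite le_eqVlt; apply/orP; left; apply/eqP; apply: eq_bigr => s sL.
  by have [-> _] := hL s sL; rewrite mul1r.
by rewrite mulr_ge0 ?pp_ge0 // ler0n.
Qed.

Lemma ret_near x : S x -> return_prob Gamma lam x = 1%E ->
  forall d : R, 0 < d -> exists n, 1 - d <= hit (pred1 x) n x.
Proof.
move=> Sx r1 d d0.
have fin : return_prob Gamma lam x \is a fin_num by rewrite r1.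
have [z [A [finA Aexc] <-]] := ub_ereal_sup_adherent d0 fin.
move: r1; rewrite /return_prob /esum => -> hz.
set L : seq (seq nat) := finmap.enum_fset (fset_set A).
exists (\max_(s <- L) size s)%N.
have hsum : (\sum_(s \in A) (path_prob Gamma lam x s)%:E)%E =
   (\sum_(s <- L) pp x s)%:E.
  rewrite fsbig_finite // sumEFin; congr (_%:E); apply: eq_bigr => s _.
  exact: pp_eq.
rewrite hsum in hz.
have : 1 - d < \sum_(s <- L) pp x s by rewrite -lte_fin EFinB.
move=> /ltW /le_trans; apply; apply: sub_sum; first exact: finmap.fset_uniq.
move=> s sL; split.
  by apply: exc_hits; apply: Aexc; move: sL; rewrite in_fset_set // inE.
exact: (@leq_bigmax_seq _ L xpredT size s sL isT).
Qed.


Definition Rirr (a b : nat) : bool := (0 < lam (b%:Z - a%:Z) a) && (a != b).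

Lemma term_le_sum (r : seq nat) (F : nat -> R) v : uniq r -> v \in r ->
  (forall u, 0 <= F u) -> F v <= \sum_(u <- r) F u.
Proof.
move=> ur vr F0; rewrite (bigD1_seq v) //= lerDl.
by apply: sumr_ge0 => u _.
Qed.

Lemma P_pos a b : S a -> Rirr a b -> 0 < P a b.
Proof.
move=> Sa /andP[l0 nab]; rewrite PE // /jumpP (negPf nab).
by rewrite divr_gt0 // Hq.
Qed.

Lemma Rirr_S a b : S a -> Rirr a b -> S b.
Proof.
move=> Sa /andP[l0 _]; apply/not_notP => Sb; move: l0; rewrite HinS ?ltxx //.
by case=> _; rewrite absz_add_sub.
Qed.

Lemma first2_pos x w : forall s y, S y -> path Rirr y s -> last y s = w ->
  x \notin s -> s != [::] -> 0 < first2 (pred1 w) (pred1 x) (size s) y.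
Proof.
elim=> [|v s IH] y Sy //; move=> /andP[ryv ps] ls; rewrite in_cons negb_or => /andP[nvx nxs] _.
have Pyv := P_pos Sy ryv.
have Sv := Rirr_S Sy ryv.
rewrite first2S.
have hv : 0 < (if v == w then 1 else if v == x then 0
             else first2 (pred1 w) (pred1 x) (size s) v).
  case: (eqVneq v w) => [_|nvw] /=; first exact: ltr01.
  rewrite eq_sym (negPf nvx); apply: IH => //.
  by apply/eqP => es; move: ls nvw; rewrite es /= => ->; rewrite eqxx.
apply: lt_le_trans (mulr_gt0 Pyv hv) _.
apply: (term_le_sum (F := fun u => P y u * (if u == w then 1 else if u == x then 0
             else first2 (pred1 w) (pred1 x) (size s) u))).
- exact: iota_uniq.
- by apply: P_in_sc; rewrite gt_eqF.
- move=> u; apply: mulr_ge0; first exact: P_ge0.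
  by case: (u == w); case: (u == x); rewrite ?ler01 ?lexx ?first2_ge0.
Qed.

Lemma cut_path (Rr : rel nat) x w : forall s y, path Rr y s -> last y s = w -> w != x ->
  (y == x) || (x \in s) -> exists s', [/\ path Rr x s', last x s' = w & x \notin s'].
Proof.
elim=> [|v s IH] y /=.
  by move=> _ -> /negPf ->; rewrite orbF.
move=> /andP[ryv ps] ls nwx hyx.
case: (boolP ((v == x) || (x \in s))) => h; first exact: IH ps ls nwx h.
have nx : x \notin v :: s by rewrite in_cons eq_sym.
move: hyx; rewrite (negPf nx) orbF => /eqP yx; subst y.
by exists (v :: s); split => //=; rewrite ryv.
Qed.

Lemma b_pos x w : S x -> S w -> w != x -> irreducible S lam ->
  exists n, 0 < first2 (pred1 w) (pred1 x) n x.
Proof.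
move=> Sx Sw nwx irr.
have [s [ls ps]] := irr x w Sx Sw.
have [s' [ps' ls' nxs']] := cut_path (Rr := Rirr) ps ls nwx (introT orP (or_introl (eqxx x))).
exists (size s'); apply: first2_pos => //.
by apply/eqP => e; move: ls' nwx; rewrite e /= => ->; rewrite eqxx.
Qed.

Lemma hit_one x w : S x -> S w -> recurrent S Gamma lam -> irreducible S lam ->
  forall d : R, 0 < d -> exists n, 1 - d <= hit (pred1 x) n w.
Proof.
move=> Sx Sw rec irr d d0.
case: (eqVneq w x) => [->|nwx]; first exact: (ret_near Sx (rec x Sx) d0).
have [n0 b0] := b_pos Sx Sw nwx irr.
set be := first2 (pred1 w) (pred1 x) n0 x in b0.
have [n1 h1] := ret_near Sx (rec x Sx) (mulr_gt0 d0 b0).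
exists (maxn n0 n1).
set n := maxn n0 n1.
have hb : be <= first2 (pred1 w) (pred1 x) n x by apply: first2_le; exact: leq_maxl.
have hh : 1 - d * be <= hit (pred1 x) n x.
  by apply: le_trans h1 _; apply: hit_le; exact: leq_maxr.
rewrite eq_sym in nwx.
have := @hit_decomp x w n x nwx; have := @first2_sum x w n x nwx.
set a := first2 (pred1 x) (pred1 w) n x.
set b := first2 (pred1 w) (pred1 x) n x.
set H := hit (pred1 x) n w.
set h := hit (pred1 x) n x.
move=> hab hdec.
have H1 : H <= 1 by apply: hit_le1.
have : be * (1 - H) <= b * (1 - H) by apply: lerM2r'; rewrite ?subr_ge0.
have : b * (1 - H) <= d * be.
  rewrite mulrBr mulr1.
  have e1 := le_trans hh hdec.
  lra.
move=> h2 h3.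
have h4 : be * (1 - H) <= be * d by rewrite [be * d]mulrC; exact: le_trans h3 h2.
by move: h4; rewrite ler_pM2l // lerBlDr -lerBlDl.
Qed.


Lemma sumP_le_in y (A B : nat -> R) : (forall v, v \in sc y -> S v -> A v <= B v) ->
  \sum_(v <- sc y) P y v * A v <= \sum_(v <- sc y) P y v * B v.
Proof.
move=> AB; rewrite !big_seq; apply: ler_sum => v vin.
case: (eqVneq (P y v) 0) => [->|ne]; first by rewrite !mul0r.
case/P_supp: ne => _ Sv _ _.
exact: lerM2l' (P_ge0 y v) (AB v vin Sv).
Qed.

Lemma list_choice (r : seq nat) (Q : nat -> nat -> Prop) :
  (forall v m m', (m <= m')%N -> Q v m -> Q v m') ->
  (forall v, v \in r -> exists m, Q v m) -> exists m, forall v, v \in r -> Q v m.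
Proof.
move=> mono; elim: r => [|a r IH] h; first by exists 0%N.
have [ma ha] := h a (mem_head a r).
have [mr hr] : exists m, forall v, v \in r -> Q v m.
  by apply: IH => v vr; apply: h; rewrite in_cons vr orbT.
exists (maxn ma mr) => v; rewrite in_cons => /orP[/eqP->|vr].
  exact: mono (leq_maxl _ _) ha.
exact: mono (leq_maxr _ _) (hr v vr).
Qed.

Lemma stime_etime x : S x -> recurrent S Gamma lam -> irreducible S lam ->
  forall n y, S y -> forall e : R, 0 < e ->
  exists m, stime (pred1 x) n y <= etime (pred1 x) m y + e.
Proof.
move=> Sx rec irr; elim=> [|n IH] y Sy e e0.
  by exists 0%N; rewrite /= add0r ltW.
set X := pred1 x.
set e1 := e / 2.
set e2 := e / 2 * q y.
have e10 : 0 < e1 by rewrite divr_gt0.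
have e20 : 0 < e2 by rewrite mulr_gt0 ?Hq // divr_gt0.
set Qp := (fun v m => S v -> stime X n v <= etime X m v + e1 /\ 1 - e2 <= hit X m v).
have mono : forall v m m', (m <= m')%N -> Qp v m -> Qp v m'.
  move=> v m m' mm' h Sv; have [h1 h2] := h Sv; split.
    apply: le_trans h1 _; rewrite lerD2r; exact: etime_le.
  apply: le_trans h2 _; exact: hit_le.
have ex : forall v, v \in sc y -> exists m, Qp v m.
  move=> v _; case: (pselect (S v)) => Sv; last by exists 0%N.
  have [m1 h1] := IH v Sv e1 e10.
  have [m2 h2] := hit_one Sx Sv rec irr e20.
  exists (maxn m1 m2) => _; split.
    apply: le_trans h1 _; rewrite lerD2r; apply: etime_le; exact: leq_maxl.
  apply: le_trans h2 _; apply: hit_le; exact: leq_maxr.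
have [m hm] := list_choice mono ex.
exists m.+1.
set Q := (q y)^-1.
set A := \sum_(v <- sc y) P y v * (if X v then 0 else etime X m v).
have hs : stime X n.+1 y <= Q + A + e1.
  rewrite stimeS -addrA lerD2l.
  apply: le_trans (sumP_le_in (B := fun v => (if X v then 0 else etime X m v) + e1) _) _.
    move=> v vin Sv; case: (X v); first by rewrite add0r ltW.
    by have [h1 _] := hm v vin Sv.
  rewrite (eq_bigr _ (fun v _ => mulrDr _ _ _)) big_split /= lerD2l -mulr_suml rowsum //.
  by rewrite mul1r lexx.
have ht : (1 - e2) * Q + A <= etime X m.+1 y.
  rewrite etimeS.
  apply: le_trans (sumP_le_in (A := fun v => (1 - e2) * Q + (if X v then 0 else etime X m v)) _).
    rewrite (eq_bigr _ (fun v _ => mulrDr _ _ _)) big_split /= -mulr_suml rowsum //.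
    by rewrite mul1r lexx.
  move=> v vin Sv; case: (X v).
    rewrite addr0 -[leRHS]mul1r; apply: lerM2r'; first exact: invq_ge0.
    by rewrite lerBlDr lerDl ltW.
  rewrite lerD2r; apply: lerM2r'; first exact: invq_ge0.
  by have [_ h2] := hm v vin Sv.
have hQ : e2 * Q = e1 by rewrite /e2 /Q -mulrA mulfV ?mulr1 // gt_eqF // Hq.
have he : e = e1 + e1 by rewrite /e1 -splitr.
rewrite he.
have ht' : Q - e2 * Q + A <= etime X m.+1 y by rewrite -[Q in Q - _]mul1r -mulrBl.
rewrite hQ in ht'.
lra.
Qed.


Lemma inf_ge : ~ finite_set S -> forall M : nat, exists z, S z /\ (M <= z)%N.
Proof.
move=> inf M.
case: (pselect (exists z, S z /\ (M <= z)%N)) => // h.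
exfalso; apply: inf; apply: (sub_finite_set _ (finite_II M)) => z Sz /=.
by rewrite ltnNge; apply/negP => Mz; apply: h; exists z.
Qed.

Lemma q_pos : ~ finite_set S -> irreducible S lam -> forall y, S y -> 0 < q y.
Proof.
move=> inf irr y Sy.
have [z [Sz yz]] := inf_ge inf y.+1.
have [s [ls ps]] := irr y z Sy Sz.
case: s ls ps => [/= zy|v s _]; first by move: yz; rewrite zy ltnn.
move=> /= /andP[/andP[l0 nyv] _].
set eta := v%:Z - y%:Z in l0.
have etaG : eta \in Gamma.
  by apply/not_notP => /negP nG; move: l0; rewrite Hout // ltxx.
have eta0 : eta != 0.
  by apply/eqP => e; move/eqP: nyv; apply; rewrite /eta in e; lia.
rewrite /qrate big_mkcond /= (bigD1_seq eta) //= eta0.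
apply: lt_le_trans l0 _; rewrite lerDl; apply: sumr_ge0 => e _.
by case: ifP => _ //; exact: Hlam0.
Qed.

Lemma frac_le (a : R) : 0 <= a -> a * (4 * (a + 1))^-1 <= 4^-1.
Proof.
move=> a0; rewrite invfM mulrCA -[leRHS]mulr1; apply: lerM2l'.
  by rewrite invr_ge0; lra.
by rewrite ler_pdivrMr ?mul1r; lra.
Qed.

Lemma main_sec x (f1 f2 : nat -> R) (N0 : nat) (C : R) :
  ~ finite_set S -> irreducible S lam -> recurrent S Gamma lam -> S x ->
  (forall y, S y -> 0 <= f1 y) -> (forall y, S y -> 0 <= f2 y) ->
  (forall M : R, exists N : nat, forall y, S y -> (N <= y)%N -> M <= f1 y) ->
  (forall M : R, exists N : nat, forall y, S y -> (N <= y)%N -> M <= f2 y / f1 y) ->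
  (forall y, S y -> (N0 <= y)%N -> 0 <= gen Gamma lam f1 y) -> 0 < C ->
  (forall y, S y -> (N0 <= y)%N -> gen Gamma lam f2 y <= C) ->
  expected_return_time Gamma lam x = +oo%E.
Proof.
move=> inf irr rec Sx f10 f20 hf1 hf2 g1 C0 g2.
set X := pred1 x.
have E0 : (0 <= expected_return_time Gamma lam x)%E.
  apply: esum_ge0 => s es; rewrite lee_fin mulr_ge0 //.
    by rewrite pp_eq // pp_ge0.
  by apply: sumr_ge0 => u _; exact: invq_ge0.
case E : (expected_return_time Gamma lam x) E0 => [r| |] //= r0.
exfalso; rewrite lee_fin in r0.
have hE : forall m, etime X m x <= r.
  by move=> m; rewrite -lee_fin -E; exact: etime_le_ert.
have hsx : forall n, stime X n x <= r.
  move=> n; apply/ler_addgt0Pr => e e0.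
  have [m hm] := stime_etime Sx rec irr n Sx e0.
  by apply: le_trans hm _; rewrite lerD2r; exact: hE.
set N := maxn N0 x.+1.
set B : pred nat := fun v => (v < N)%N.
have XB : forall v, X v -> B v.
  by move=> v /eqP ->; rewrite /B /N; lia.
set K := \sum_(v <- iota 0 N) `|f1 v|.
have K0 : 0 <= K by apply: sumr_ge0 => v _; exact: normr_ge0.
have hK : forall v, (v < N)%N -> f1 v <= K.
  move=> v vN; apply: le_trans (ler_norm (f1 v)) _.
  rewrite /K (bigD1_seq v) ?iota_uniq ?mem_iota //= lerDl.
  by apply: sumr_ge0 => u _; exact: normr_ge0.
have [N1 hN1] := hf1 (K + 1).
have [z [Sz zN]] := inf_ge inf (maxn N N1).
have zNN : (N <= z)%N by lia.
have f1z : K + 1 <= f1 z by apply: hN1 => //; lia.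
have nxz : x != z by apply/eqP => e; move: zNN; rewrite -e /N; lia.
have nzx : z != x by rewrite eq_sym.
have [n0 b0] := b_pos Sx Sz nzx irr.
set be := first2 (pred1 z) (pred1 x) n0 x in b0.
have hsz : forall m, stime B m z <= r / be.
  move=> m; apply: le_trans (stime_sub m z XB) _.
  rewrite ler_pdivlMr // mulrC.
  apply: le_trans (@stime_decomp x z n0 m x nxz) _; exact: hsx.
set M := f2 z + C * (r / be).
have M0 : 0 <= M by rewrite addr_ge0 ?f20 // mulr_ge0 ?divr_ge0 // ltW.
have nBz : ~~ B z by rewrite /B -leqNgt.
have L1 : forall n, f1 z <= Ex B f1 n z.
  move=> n; apply: Ex_lyap1 => // y Sy nBy; apply: g1 => //.
  by move: nBy; rewrite /B -leqNgt /N; lia.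
have L2 : forall n, Ex B f2 n z <= M.
  move=> n; apply: le_trans (Ex_lyap2 (ltW C0) _ n Sz nBz) _.
    move=> y Sy nBy; apply: g2 => //.
    by move: nBy; rewrite /B -leqNgt /N; lia.
  by rewrite lerD2l; apply: lerM2l'; [exact: ltW|exact: hsz].
have L3 := fun n => @Ex_hit B X n z XB.
set eps := (4 * (M + 1))^-1.
have eps0 : 0 < eps by rewrite invr_gt0; lra.
have [Nb hNb] := hf2 eps^-1.
have [Na hNa] := hf1 1.
set Ne := maxn (maxn Nb Na) N.
set Ke := \sum_(v <- iota 0 Ne) `|f1 v|.
have Ke0 : 0 <= Ke by apply: sumr_ge0 => v _; exact: normr_ge0.
have hKe : forall v, (v < Ne)%N -> f1 v <= Ke.
  move=> v vN; apply: le_trans (ler_norm (f1 v)) _.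
  rewrite /Ke (bigD1_seq v) ?iota_uniq ?mem_iota //= lerDl.
  by apply: sumr_ge0 => u _; exact: normr_ge0.
set g := fun v => if B v then (0 : R) else 1.
have bound : forall v, S v -> f1 v <= K + Ke * g v + eps * f2 v.
  move=> v Sv; have e2 : 0 <= eps * f2 v by rewrite mulr_ge0 ?f20 // ltW.
  case: (ltnP v N) => vN.
    rewrite /g /B vN mulr0 addr0; apply: le_trans (hK v vN) _; lra.
  have gv : g v = 1 by rewrite /g /B ltnNge vN.
  rewrite gv mulr1.
  case: (ltnP v Ne) => vNe.
    by apply: le_trans (hKe v vNe) _; lra.
  have f1p : 0 < f1 v by apply: lt_le_trans ltr01 (hNa v Sv _); lia.
  have h := hNb v Sv ltac:(lia).
  rewrite ler_pdivlMr // in h.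
  have h' : f1 v <= eps * f2 v.
    have := lerM2l' (ltW eps0) h; rewrite mulrA mulfV ?gt_eqF // mul1r.
    by [].
  lra.
have L4 : forall n, Ex B f1 n z <= K + Ke * Ex B g n z + eps * Ex B f2 n z.
  by move=> n; apply: Ex_lin => //.
set de := (4 * (Ke + 1))^-1.
have de0 : 0 < de by rewrite invr_gt0; lra.
have [n hn] := hit_one Sx Sz rec irr de0.
have Eg : Ex B g n z <= de by have := L3 n; rewrite -/g; lra.
have q1 : Ke * Ex B g n z <= 4^-1.
  apply: le_trans (frac_le Ke0); exact: lerM2l' Ke0 Eg.
have q2 : eps * Ex B f2 n z <= 4^-1.
  apply: le_trans (frac_le M0); rewrite [leRHS]mulrC; exact: lerM2l' (ltW eps0) (L2 n).
have := le_trans f1z (le_trans (L1 n) (L4 n)).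
lra.
Qed.

End Chain.

Unset Implicit Arguments.
Set Strict Implicit.

Theorem mainTheorem5 (R : realType) (S : set nat) (Gamma : seq int)
    (lam : int -> nat -> R) (f1 f2 : nat -> R) :
  (* standing assumptions *)
  ~ finite_set S ->
  uniq Gamma ->
  (forall eta x, S x -> eta \notin Gamma -> lam eta x = 0) ->
  (forall eta x, 0 <= lam eta x) ->
  (forall eta x, S x -> ~ inS S (x%:Z + eta) -> lam eta x = 0) ->
  irreducible S lam ->
  (* X recurrent *)
  recurrent S Gamma lam ->
  (* f1, f2 non-negative on S *)
  (forall x, S x -> 0 <= f1 x) ->
  (forall x, S x -> 0 <= f2 x) ->
  (* (i) *)
  (forall M : R, exists N : nat, forall x, S x -> (N <= x)%N -> M <= f1 x) ->
  (forall M : R, exists N : nat, forall x, S x -> (N <= x)%N -> M <= f2 x / f1 x) ->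
  (* (ii) *)
  (exists N : nat, forall x, S x -> (N <= x)%N -> 0 <= gen Gamma lam f1 x) ->
  (* (iii) A f2 <~ 1 *)
  (exists C : R, 0 < C /\ exists N : nat, forall x, S x -> (N <= x)%N ->
      gen Gamma lam f2 x <= C * 1) ->
  null_recurrent S Gamma lam.
Proof.
move=> inf HG Hout Hlam0 HinS irr rec f10 f20 hf1 hf2 [N2 g1] [C [C0 [N3 g2]]].
split => // x Sx.
have Hq : forall y, S y -> 0 < qrate Gamma lam y.
  by move=> y Sy; exact: (q_pos HG Hout Hlam0 inf irr Sy).
apply: (@main_sec R S Gamma lam HG Hout Hlam0 HinS Hq x f1 f2 (maxn N2 N3) C
          inf irr rec Sx f10 f20 hf1 hf2 _ C0 _).
- move=> y Sy hy; apply: g1 => //; lia.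
- move=> y Sy hy; rewrite -[C]mulr1; apply: g2 => //; lia.
Qed.
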